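(* Let $G=(V,E)$ be a moral DAG and $\pi$ an arbitrary topological ordering of $G$. Let $S=\{s_1,\dots,s_k\}\subseteq V$ with $\pi(s_1)<\pi(s_2)<\dots<\pi(s_k)$. Then every arc $u\to v$ of $G$ with $s_1\in \mathrm{Des}(u)\cap\mathrm{Anc}(v)$ is oriented (directed) in the interventional essential graph $\mathcal{E}_{\{S\}}(G)$.
   Context: A moral DAG is a DAG without v-structures ($u\to x\leftarrow y$ with $u,y$ nonadjacent). $\mathrm{Des}(u)$ and $\mathrm{Anc}(v)$ denote the (strict) descendants of $u$ and ancestors of $v$ in $G$. The interventional essential graph $\mathcal{E}_{\{S\}}(G)$ of the single intervention $S$ is obtained from the skeleton of $G$ by orienting, as in $G$, every edge with exactly one endpoint in $S$ (there are no v-structures), then repeatedly applying Meek rules until none applies: R1 orients $a - b$ as $a\to b$ if $c\to a$ with $c,b$ nonadjacent; R2 if $a\to c\to b$; R3 if $d - a - c$, $d\to b\leftarrow c$, $c,d$ nonadjacent; R4 if $d - a - c$, $d\to c\to b$, $b,d$ nonadjacent. *)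

(* Defs.v *)
(* A directed graph on a finite vertex type T is a relation
   g : rel T, where g u v means there is an arc u -> v. *)
From Stdlib Require Import Relations.
From mathcomp Require Import all_boot.
Set Implicit Arguments. Unset Strict Implicit. Unset Printing Implicit Defensive.

Section Graphs.
Variable T : finType.
Implicit Types (g : rel T) (D : {set T * T}).

Definition reach g u v : bool := [exists w, g u w && connect g w v].

Definition is_dag g : Prop := forall x, ~~ reach g x x.

Definition adj g x y : bool := g x y || g y x.

Definition moral g : Prop :=
  forall u x y, g u x -> g y x -> u != y -> adj g u y.

Definition topological_order g (pi : T -> nat) : Prop :=
  injective pi /\ forall x y, g x y -> pi x < pi y.

Definition Des g u : {set T} := [set x | reach g u x].
Definition Anc g v : {set T} := [set x | reach g x v].

(* Partially directed graphs on the skeleton of g: D is the set of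
   oriented edges (a,b), meaning a -> b; an adjacent pair oriented in
   neither direction is undirected. *)
Definition dir D a b : bool := (a, b) \in D.
Definition und g D a b : bool :=
  [&& adj g a b, (a, b) \notin D & (b, a) \notin D].

Definition init_orient g (S : {set T}) : {set T * T} :=
  [set e | g e.1 e.2 && ((e.1 \in S) != (e.2 \in S))].

Definition meekR1 g D a b : Prop :=
  exists c, dir D c a /\ ~~ adj g c b.
Definition meekR2 g D a b : Prop :=
  exists c, dir D a c /\ dir D c b.
Definition meekR3 g D a b : Prop :=
  exists c d, [/\ c != d, und g D d a /\ und g D a c,
                  dir D d b, dir D c b & ~~ adj g c d].
Definition meekR4 g D a b : Prop :=
  exists c d, [/\ b != d, und g D d a /\ und g D a c,
                  dir D d c, dir D c b & ~~ adj g b d].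

Definition meek_step g D D' : Prop :=
  exists a b, [/\ und g D a b,
     (meekR1 g D a b \/ meekR2 g D a b \/ meekR3 g D a b \/ meekR4 g D a b)
     & D' = (a, b) |: D].

(* D is a possible outcome of "apply Meek rules repeatedly until none
   applies", starting from the intervention orientation *)
Definition ess_graph_result g (S : {set T}) D : Prop :=
  clos_refl_trans _ (meek_step g) (init_orient g S) D /\
  forall D', ~ meek_step g D D'.

End Graphs.

(* Main.v *)
Require Import Defs.
From Stdlib Require Import Relations.
From mathcomp Require Import all_boot.
Set Implicit Arguments. Unset Strict Implicit. Unset Printing Implicit Defensive.

Lemma path_last_pred (T : finType) (g : rel T) (s : seq T) (a y : T) :
  path g a s -> last a s = y -> a = y \/ exists p, connect g a p /\ g p y.
Proof.
elim: s a => [|b s IH] a /=; first by left.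
case/andP=> gab pbs ly; case: (IH b pbs ly) => [eby|[p [cbp gpy]]].
  by right; exists a; split => //; rewrite -eby.
right; exists p; split => //; apply: connect_trans cbp; exact: connect1.
Qed.

Lemma reach_last (T : finType) (g : rel T) x y :
  reach g x y -> exists p, connect g x p /\ g p y.
Proof.
case/existsP=> w /andP[gxw /connectP[s ps ly]].
case: (path_last_pred ps (esym ly)) => [ewy|[p [cwp gpy]]].
  by exists x; split => //; rewrite -ewy.
exists p; split => //; apply: connect_trans cwp; exact: connect1.
Qed.

Lemma connect_split (T : finType) (g : rel T) x y :
  connect g x y -> x = y \/ reach g x y.
Proof.
case/connectP=> [[|w s]] /=; first by move=> _ ->; left.
case/andP=> gxw pws ly; right; apply/existsP; exists w; rewrite gxw /=.
by apply/connectP; exists s.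
Qed.

Lemma arc_reach (T : finType) (g : rel T) x y : g x y -> reach g x y.
Proof. by move=> gxy; apply/existsP; exists y; rewrite gxy connect0. Qed.

Lemma reach_trans_c (T : finType) (g : rel T) x y z :
  reach g x y -> connect g y z -> reach g x z.
Proof.
case/existsP=> w /andP[gxw cwy] cyz; apply/existsP; exists w.
by rewrite gxw (connect_trans cwy cyz).
Qed.

Lemma c_reach (T : finType) (g : rel T) x y z :
  connect g x y -> g y z -> reach g x z.
Proof.
move=> cxy gyz; case: (connect_split cxy) => [->|rxy]; first exact: arc_reach.
apply: reach_trans_c rxy _; exact: connect1.
Qed.

Lemma reach_connect (T : finType) (g : rel T) x y : reach g x y -> connect g x y.
Proof.
case/existsP=> w /andP[gxw cwy]; apply: connect_trans cwy; exact: connect1.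
Qed.

Lemma path_pi (T : finType) (g : rel T) (pi : T -> nat) :
  (forall x y, g x y -> pi x < pi y) ->
  forall s a, path g a s -> pi a <= pi (last a s).
Proof.
move=> hpi; elim=> [|b s IH] a //= /andP[gab pbs].
apply: leq_trans (IH _ pbs); exact: ltnW (hpi _ _ gab).
Qed.

Lemma connect_pi (T : finType) (g : rel T) (pi : T -> nat) :
  (forall x y, g x y -> pi x < pi y) ->
  forall x y, connect g x y -> pi x <= pi y.
Proof. move=> hpi x y /connectP[s ps ->]; exact: (path_pi hpi ps). Qed.

Lemma reach_pi (T : finType) (g : rel T) (pi : T -> nat) :
  (forall x y, g x y -> pi x < pi y) ->
  forall x y, reach g x y -> pi x < pi y.
Proof.
move=> hpi x y /existsP[w /andP[gxw cwy]].
exact: leq_trans (hpi _ _ gxw) (connect_pi hpi cwy).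
Qed.

Lemma dag_no_cycle (T : finType) (g : rel T) x y :
  is_dag g -> reach g x y -> connect g y x -> False.
Proof. by move=> hd rxy cyx; move: (hd x); rewrite (reach_trans_c rxy cyx). Qed.

Lemma dag_arc_back (T : finType) (g : rel T) x y :
  is_dag g -> g x y -> g y x -> False.
Proof. move=> hd gxy gyx; apply: (dag_no_cycle hd (arc_reach gxy)); exact: connect1. Qed.

Lemma step_sound (T : finType) (g : rel T) (D : {set T * T}) (a b : T) :
  is_dag g -> moral g -> (forall x y, (x, y) \in D -> g x y) ->
  und g D a b ->
  (meekR1 g D a b \/ meekR2 g D a b \/ meekR3 g D a b \/ meekR4 g D a b) ->
  g a b.
Proof.
move=> hd hm hD /and3P[hadj hab hba] hr.
case/orP: hadj => // gba; exfalso.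
case: hr => [[c [dca nacb]]|[[c [dac dcb]]|[[c [d [cd [ud ua] db cb ncd]]]|[c [d [bd [ud ua] dc cb nbd]]]]]].
- have gca := hD _ _ dca.
  have cb : c != b by apply/eqP=> ecb; move: hba; rewrite -ecb; move: dca; rewrite /dir => ->.
  by move: nacb; rewrite (hm _ _ _ gca gba cb).
- apply: (dag_no_cycle hd (arc_reach (hD _ _ dac))).
  apply: connect_trans (connect1 (hD _ _ dcb)) (connect1 gba).
- have gdb := hD _ _ db; have gcb := hD _ _ cb.
  move: ud ua => /andP[adj1 _] /andP[adj2 _].
  have gda : g d a.
    case/orP: adj1 => // gad; exfalso; apply: (dag_no_cycle hd (arc_reach gad)).
    exact: connect_trans (connect1 gdb) (connect1 gba).
  have gca : g c a.
    case/orP: adj2 => // gac; exfalso; apply: (dag_no_cycle hd (arc_reach gac)).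
    exact: connect_trans (connect1 gcb) (connect1 gba).
  by move: ncd; rewrite (hm _ _ _ gca gda cd).
- have gdc := hD _ _ dc; have gcb := hD _ _ cb.
  move: ud ua => /andP[adj1 _] /andP[adj2 _].
  have gca : g c a.
    case/orP: adj2 => // gac; exfalso; apply: (dag_no_cycle hd (arc_reach gac)).
    exact: connect_trans (connect1 gcb) (connect1 gba).
  have gda : g d a.
    case/orP: adj1 => // gad; exfalso; apply: (dag_no_cycle hd (arc_reach gad)).
    exact: connect_trans (connect1 gdc) (connect1 gca).
  by move: nbd; rewrite (hm _ _ _ gba gda bd).
Qed.

Lemma meek_sound (T : finType) (g : rel T) (S : {set T}) (D : {set T * T}) :
  is_dag g -> moral g ->
  clos_refl_trans _ (meek_step g) (init_orient g S) D ->
  (init_orient g S \subset D) /\ (forall a b, (a, b) \in D -> g a b).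
Proof.
move=> hd hm /clos_rt_rtn1_iff; elim=> [|D1 D2 [a [b [hu hr ->]]] _ [h1 h2]].
- split => //; by move=> a b; rewrite inE => /andP[].
- split; first by apply: subset_trans h1 _; apply/subsetP=> x xD; rewrite in_setU1 xD orbT.
  move=> x y; rewrite in_setU1 => /orP[/eqP [-> ->]|]; last exact: h2.
  exact: step_sound hu hr.
Qed.

Lemma fix_und (T : finType) (g : rel T) (D : {set T * T}) a b :
  (forall D', ~ meek_step g D D') -> und g D a b ->
  (meekR1 g D a b \/ meekR2 g D a b \/ meekR3 g D a b \/ meekR4 g D a b) -> False.
Proof. by move=> hf hu hr; apply: (hf ((a, b) |: D)); exists a, b. Qed.

Lemma not_und (T : finType) (g : rel T) (D : {set T * T}) a b :
  is_dag g -> (forall x y, (x, y) \in D -> g x y) -> g a b -> ~~ und g D a b ->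
  (a, b) \in D.
Proof.
move=> hd hD gab; rewrite /und /adj gab /= negb_and !negbK.
case/orP=> // /hD gba; exfalso; exact: dag_arc_back hd gab gba.
Qed.

Lemma lemL (T : finType) (g : rel T) (pi : T -> nat) (S : {set T}) (s1 : T)
  (D : {set T * T}) :
  is_dag g -> (forall x y, g x y -> pi x < pi y) ->
  init_orient g S \subset D -> (forall a b, (a, b) \in D -> g a b) ->
  (forall D', ~ meek_step g D D') -> s1 \in S ->
  forall n v, pi v < n -> reach g s1 v -> v \notin S ->
  exists c, connect g s1 c /\ (c, v) \in D.
Proof.
move=> hd hpi hI hD hf hs1; elim=> // n IH v pvn rv vS.
have [p0 [c0 g0]] := reach_last rv.
have P0 : [pred p | g p v && connect g s1 p] p0 by rewrite /= g0 c0.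
case: (arg_minnP pi P0) => p /andP[gpv cs1p] pmin.
case pS: (p \in S).
  exists p; split => //; apply: (subsetP hI); rewrite inE /= gpv pS.
  by move: vS; case: (v \in S).
have rs1p : reach g s1 p.
  case: (connect_split cs1p) => // ep; by move: pS; rewrite -ep hs1.
have ppv := hpi _ _ gpv.
have [c [cs1c dcp]] := IH p (leq_trans ppv pvn) rs1p (negbT pS).
have gcp := hD _ _ dcp.
case acv: (adj g c v).
  exfalso; case/orP: acv => [gcv|gvc].
    have := pmin c; rewrite /= gcv cs1c => /(_ isT).
    by rewrite leqNgt (hpi _ _ gcp).
  apply: (dag_no_cycle hd (arc_reach gvc)).
  exact: connect_trans (connect1 gcp) (connect1 gpv).
exists p; split => //; apply: not_und => //; apply/negP=> hu.
apply: (fix_und hf hu); left; exists c; split => //; by rewrite acv.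
Qed.

Lemma lemM (T : finType) (g : rel T) (pi : T -> nat) (S : {set T}) (s1 : T)
  (D : {set T * T}) :
  is_dag g -> moral g -> (forall x y, g x y -> pi x < pi y) ->
  init_orient g S \subset D -> (forall a b, (a, b) \in D -> g a b) ->
  (forall D', ~ meek_step g D D') -> s1 \in S ->
  (forall s, s \in S -> pi s1 <= pi s) ->
  forall n v, pi v < n -> reach g s1 v -> forall u, reach g u s1 -> g u v ->
  (u, v) \in D.
Proof.
move=> hd hm hpi hI hD hf hs1 hmin; elim=> // n IH v pvn rv u rus guv.
have uS : u \notin S.
  apply/negP=> uS; have := hmin _ uS; by rewrite leqNgt (reach_pi hpi rus).
case vS: (v \in S).
  apply: (subsetP hI); rewrite inE /= guv vS; by move: uS; case: (u \in S).
have [c [cs1c dcv]] := lemL hd hpi hI hD hf hs1 pvn rv (negbT vS).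
have gcv := hD _ _ dcv.
have uc : u != c.
  apply/eqP=> euc; apply: (dag_no_cycle hd rus); by rewrite -euc in cs1c.
have guc : g u c.
  case/orP: (hm _ _ _ guv gcv uc) => // gcu; exfalso.
  apply: (dag_no_cycle hd rus); exact: connect_trans cs1c (connect1 gcu).
have duc : (u, c) \in D.
  case: (connect_split cs1c) => [ec|rc].
    apply: (subsetP hI); rewrite inE /= guc -ec hs1; by move: uS; case: (u \in S).
  have pcv := hpi _ _ gcv.
  exact: IH c (leq_trans pcv pvn) rc u rus guc.
apply: not_und => //; apply/negP=> hu.
apply: (fix_und hf hu); right; left; by exists c.
Qed.

Unset Implicit Arguments. Set Strict Implicit.

Theorem mainTheorem5 (T : finType) (g : rel T) (pi : T -> nat)
    (S : {set T}) (s1 : T) :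
  is_dag g -> moral g -> topological_order g pi ->
  s1 \in S -> (forall s, s \in S -> pi s1 <= pi s) ->
  forall u v, g u v -> s1 \in Des g u :&: Anc g v ->
  forall D, ess_graph_result g S D ->
  dir D u v || dir D v u.
Proof.
move=> hd hm [_ hpi] hs1 hmin u v guv; rewrite !inE => /andP[rus rsv] D [hc hf].
have [hI hD] := meek_sound hd hm hc.
by rewrite /dir (lemM hd hm hpi hI hD hf hs1 hmin (ltnSn (pi v)) rsv rus guv).
Qed.
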